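(* Let $K$ be a multiplicative Lie algebra and $p:K\to K/\mathcal Z(K)$ the natural projection, $p'=p|_{{}^M[K,K]}$. Then there exists a homomorphism $\Delta:\tilde M(K/\mathcal Z(K))\to{}^M[K,K]$ such that the sequence $$1\to\ker\Delta\to\tilde M(K/\mathcal Z(K))\xrightarrow{\Delta}{}^M[K,K]\xrightarrow{p'}{}^M\big[K/\mathcal Z(K),K/\mathcal Z(K)\big]\to1$$ is exact.
   Context: A multiplicative Lie algebra is a group $(G,\cdot)$ with a binary operation $\star$ such that for all $x,y,z\in G$: $x\star x=1$; $x\star(yz)=(x\star y)\,{}^y(x\star z)$; $(xy)\star z={}^x(y\star z)(x\star z)$; $((x\star y)\star{}^yz)((y\star z)\star{}^zx)((z\star x)\star{}^xy)=1$; ${}^z(x\star y)={}^zx\star{}^zy$, where ${}^xy=xyx^{-1}$. $Z(G)$ is the group center, $LZ(G)=\{x: x\star y=1\ \forall y\}$, $\mathcal Z(G)=LZ(G)\cap Z(G)$; $[x,y]$ is the group commutator. For ideals $A,B$ of $G$, ${}^M[A,B]=(A\star B)[A,B]$, where $A\star B$ is generated by all $a\star b$ ($a\in A,b\in B$); in particular ${}^M[G,G]=(G\star G)[G,G]$. The Schur multiplier of a multiplicative Lie algebra $Q$ is $\tilde M(Q)=({}^M[F,F]\cap R)/{}^M[R,F]$ for any free presentation $1\to R\to F\to Q\to1$ ($F$ a free multiplicative Lie algebra); it is independent of the presentation up to isomorphism. *)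

(* Defs.v *)
Record MLA := {
  car :> Type;
  mul : car -> car -> car;
  one : car;
  inv : car -> car;
  star : car -> car -> car;
  mulA : forall x y z, mul x (mul y z) = mul (mul x y) z;
  mul1x : forall x, mul one x = x;
  mulVx : forall x, mul (inv x) x = one;
  (* conjugation  ^x y = x y x^-1 is written  mul (mul x y) (inv x) *)
  star_xx : forall x, star x x = one;
  star_xM : forall x y z,
    star x (mul y z) = mul (star x y) (mul (mul y (star x z)) (inv y));
  star_Mx : forall x y z,
    star (mul x y) z = mul (mul (mul x (star y z)) (inv x)) (star x z);
  star_jacobi : forall x y z,
    mul (mul (star (star x y) (mul (mul y z) (inv y)))
             (star (star y z) (mul (mul z x) (inv z))))
        (star (star z x) (mul (mul x y) (inv x))) = one;
  star_conj : forall x y z,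
    mul (mul z (star x y)) (inv z) =
    star (mul (mul z x) (inv z)) (mul (mul z y) (inv z))
}.

Arguments mul {m}.
Arguments one {m}.
Arguments inv {m}.
Arguments star {m}.

Definition conj {G : MLA} (x y : G) : G := mul (mul x y) (inv x).

Definition commg {G : MLA} (x y : G) : G := mul (mul (mul x y) (inv x)) (inv y).

Definition setT {G : MLA} : G -> Prop := fun _ => True.

Definition is_subgroup {G : MLA} (H : G -> Prop) : Prop :=
  H one /\ (forall x y, H x -> H y -> H (mul x y)) /\ (forall x, H x -> H (inv x)).

Definition gen {G : MLA} (S : G -> Prop) : G -> Prop :=
  fun x => forall H : G -> Prop, is_subgroup H -> (forall y, S y -> H y) -> H x.

Definition star_sub {G : MLA} (A B : G -> Prop) : G -> Prop :=
  gen (fun x => exists a b, A a /\ B b /\ x = star a b).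

Definition comm_sub {G : MLA} (A B : G -> Prop) : G -> Prop :=
  gen (fun x => exists a b, A a /\ B b /\ x = commg a b).

Definition Mcomm {G : MLA} (A B : G -> Prop) : G -> Prop :=
  fun x => exists u v, star_sub A B u /\ comm_sub A B v /\ x = mul u v.

Definition Zcenter {G : MLA} : G -> Prop := fun x => forall y, mul x y = mul y x.
Definition LZ {G : MLA} : G -> Prop := fun x => forall y, star x y = one.
Definition calZ {G : MLA} : G -> Prop := fun x => LZ x /\ Zcenter x.

Definition mla_hom {G H : MLA} (f : G -> H) : Prop :=
  forall x y, f (mul x y) = mul (f x) (f y) /\ f (star x y) = star (f x) (f y).

Definition is_free_mla {X : Type} {F : MLA} (i : X -> F) : Prop :=
  forall (L : MLA) (f : X -> L),
    exists g : F -> L, mla_hom g /\ (forall x, g (i x) = f x) /\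
      forall g' : F -> L, mla_hom g' -> (forall x, g' (i x) = f x) ->
        forall y, g' y = g y.

(* Main.v *)
Require Import Defs.
From Stdlib Require Import IndefiniteDescription.

Section G.
Variable G : MLA.
Implicit Types x y z : G.

Lemma mulxV x : mul x (inv x) = one.
Proof.
  rewrite <- (mul1x G (mul x (inv x))).
  rewrite <- (mulVx G (inv x)).
  rewrite <- mulA. rewrite (mulA G (inv x) x (inv x)).
  rewrite (mulVx G x), mul1x. reflexivity.
Qed.

Lemma mulx1 x : mul x one = x.
Proof. rewrite <- (mulVx G x), mulA, mulxV. apply mul1x. Qed.

Lemma cancel_l (a x y : G) : mul a x = mul a y -> x = y.
Proof.
  intro H. rewrite <- (mul1x G x), <- (mul1x G y), <- (mulVx G a), <- !mulA, H. reflexivity.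
Qed.

Lemma idem_one x : mul x x = x -> x = one.
Proof. intro H. apply (cancel_l x). rewrite mulx1. exact H. Qed.

Lemma inv_uniq (a b : G) : mul a b = one -> a = inv b.
Proof.
  intro H. rewrite <- (mulx1 a), <- (mulxV b), mulA, H. apply mul1x.
Qed.

Lemma inv_one : inv (@one G) = one.
Proof. symmetry. apply inv_uniq. apply mul1x. Qed.

Lemma star_x1 x : star x one = one.
Proof.
  apply idem_one. pose proof (star_xM G x one one) as E.
  rewrite ?mul1x, ?inv_one, ?mulx1 in E. symmetry; exact E.
Qed.

Lemma star_1x x : star one x = one.
Proof.
  apply idem_one. pose proof (star_Mx G one one x) as E.
  rewrite ?mul1x, ?inv_one, ?mulx1 in E. symmetry; exact E.
Qed.

Lemma star_anti x y : mul (star y x) (star x y) = one.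
Proof.
  pose proof (star_xx G (mul x y)) as E.
  rewrite star_Mx in E.
  rewrite (star_xM G y x y), star_xx, mulx1, mulxV, mulx1 in E.
  rewrite (star_xM G x x y), star_xx, mul1x in E.
  rewrite <- !mulA in E.
  rewrite (mulA G (inv x) x), mulVx, mul1x in E.
  transitivity (mul (mul (inv x) (mul x (mul (mul (star y x) (star x y)) (inv x)))) x).
  - rewrite !mulA, (mulVx G x), mul1x, <- mulA, mulVx, mulx1. reflexivity.
  - rewrite <- (mulA G (star y x)), E, mulx1. apply mulVx.
Qed.

Lemma star_xLZ x z : LZ z -> star x z = one.
Proof.
  intro Hz. pose proof (star_anti x z) as E. rewrite Hz, mul1x in E. exact E.
Qed.

Lemma inv_mul x y : inv (mul x y) = mul (inv y) (inv x).
Proof.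
  symmetry. apply inv_uniq. rewrite <- mulA, (mulA G (inv x)), mulVx, mul1x. apply mulVx.
Qed.



Lemma commg_central z y : Zcenter z -> commg z y = one.
Proof.
  intro Hz. unfold commg. rewrite Hz, <- (mulA G y z), mulxV, mulx1. apply mulxV.
Qed.

Lemma commg_Zl (a z b : G) : Zcenter z -> commg (mul a z) b = commg a b.
Proof.
  intro Hz. unfold commg. rewrite inv_mul.
  rewrite <- (mulA G a z b), Hz, (mulA G a b z).
  rewrite <- (mulA G (mul a b) z), (mulA G z (inv z)), mulxV, mul1x. reflexivity.
Qed.

Lemma inv_central z : Zcenter z -> Zcenter (inv z).
Proof.
  intros Hz y. apply (cancel_l z). rewrite mulA, mulxV, mul1x.
  rewrite mulA, (Hz y), <- mulA, mulxV, mulx1. reflexivity.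
Qed.

Lemma commg_Zr (a b z : G) : Zcenter z -> commg a (mul b z) = commg a b.
Proof.
  intro Hz. unfold commg. rewrite inv_mul.
  rewrite (mulA G a b z). rewrite <- (mulA G (mul a b) z (inv a)), Hz.
  rewrite (mulA G (mul a b) (inv a) z). rewrite <- (mulA G (mul (mul a b) (inv a)) z).
  rewrite (mulA G z (inv z)), mulxV, mul1x. reflexivity.
Qed.

Lemma star_Zl (a z b : G) : LZ z -> star (mul a z) b = star a b.
Proof. intro Hz. rewrite star_Mx, Hz, mulx1, mulxV, mul1x. reflexivity. Qed.

Lemma star_Zr (a b z : G) : LZ z -> star a (mul b z) = star a b.
Proof. intro Hz. rewrite star_xM, (star_xLZ a z Hz), mulx1, mulxV, mulx1. reflexivity. Qed.

Lemma gen_sub (S : G -> Prop) : is_subgroup (gen S).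
Proof.
  split; [|split].
  - intros H [H1 _] _. exact H1.
  - intros x y Hx Hy H HH HS. destruct HH as [H1 [HM HI]].
    apply HM; [apply Hx|apply Hy]; try split; auto.
  - intros x Hx H HH HS. destruct HH as [H1 [HM HI]]. apply HI. apply Hx; try split; auto.
Qed.

Lemma gen_in (S : G -> Prop) x : S x -> gen S x.
Proof. intros Hx H _ HS. auto. Qed.

End G.

Section H.
Variables G H : MLA.
Variable h : G -> H.
Hypothesis hh : mla_hom h.

Lemma hom_mul (x y : G) : h (mul x y) = mul (h x) (h y).
Proof. apply hh. Qed.
Lemma hom_star (x y : G) : h (star x y) = star (h x) (h y).
Proof. apply hh. Qed.

Lemma hom_one : h one = one.
Proof. apply idem_one. rewrite <- hom_mul, mul1x. reflexivity. Qed.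

Lemma hom_inv (x : G) : h (inv x) = inv (h x).
Proof. apply inv_uniq. rewrite <- hom_mul, mulVx. apply hom_one. Qed.

Lemma hom_commg (x y : G) : h (commg x y) = commg (h x) (h y).
Proof. unfold commg. rewrite !hom_mul, !hom_inv. reflexivity. Qed.

Lemma preim_sub (S : H -> Prop) : is_subgroup S -> is_subgroup (fun x => S (h x)).
Proof.
  intros [S1 [SM SI]]. split; [|split].
  - rewrite hom_one. exact S1.
  - intros x y Hx Hy. rewrite hom_mul. auto.
  - intros x Hx. rewrite hom_inv. auto.
Qed.

Lemma im_sub (S : G -> Prop) : is_subgroup S ->
  is_subgroup (fun y => exists x, S x /\ h x = y).
Proof.
  intros [S1 [SM SI]]. split; [|split].
  - exists one. split; [exact S1| apply hom_one].
  - intros x y [a [Ha <-]] [b [Hb <-]]. exists (mul a b). split; auto. apply hom_mul.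
  - intros x [a [Ha <-]]. exists (inv a). split; auto. apply hom_inv.
Qed.

Lemma Mcomm_fwd (a : G) : Mcomm setT setT a -> Mcomm setT setT (h a).
Proof.
  intros [u [v [Hu [Hv ->]]]]. exists (h u), (h v). split; [|split].
  - apply (Hu (fun x => star_sub setT setT (h x))).
    + apply preim_sub, gen_sub.
    + intros y [x1 [x2 [_ [_ ->]]]]. apply gen_in. exists (h x1), (h x2).
      split; [exact I|split; [exact I|apply hom_star]].
  - apply (Hv (fun x => comm_sub setT setT (h x))).
    + apply preim_sub, gen_sub.
    + intros y [x1 [x2 [_ [_ ->]]]]. apply gen_in. exists (h x1), (h x2).
      split; [exact I|split; [exact I|apply hom_commg]].
  - apply hom_mul.
Qed.

Hypothesis dec : forall y : H, exists x z, calZ z /\ y = mul (h x) z.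

Lemma Mcomm_bwd (k : H) : Mcomm setT setT k -> exists a, Mcomm setT setT a /\ h a = k.
Proof.
  intros [u [v [Hu [Hv ->]]]].
  destruct (Hu (fun y => exists x, star_sub setT setT x /\ h x = y)) as [a [Ha Ea]].
  - apply im_sub, gen_sub.
  - intros y [y1 [y2 [_ [_ ->]]]].
    destruct (dec y1) as [x1 [z1 [[L1 C1] ->]]].
    destruct (dec y2) as [x2 [z2 [[L2 C2] ->]]].
    exists (star x1 x2). split.
    + apply gen_in. exists x1, x2. split; [exact I|split; [exact I|reflexivity]].
    + rewrite star_Zl, star_Zr by assumption. apply hom_star.
  - destruct (Hv (fun y => exists x, comm_sub setT setT x /\ h x = y)) as [b [Hb Eb]].
    + apply im_sub, gen_sub.
    + intros y [y1 [y2 [_ [_ ->]]]].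
      destruct (dec y1) as [x1 [z1 [[L1 C1] ->]]].
      destruct (dec y2) as [x2 [z2 [[L2 C2] ->]]].
      exists (commg x1 x2). split.
      * apply gen_in. exists x1, x2. split; [exact I|split; [exact I|reflexivity]].
      * rewrite commg_Zl, commg_Zr by assumption. apply hom_commg.
    + exists (mul a b). split.
      * exists a, b. auto.
      * rewrite hom_mul, Ea, Eb. reflexivity.
Qed.

End H.

Arguments hom_mul {G H h} hh x y.
Arguments hom_star {G H h} hh x y.
Arguments hom_one {G H h} hh.
Arguments hom_inv {G H h} hh x.
Arguments hom_commg {G H h} hh x y.
Arguments Mcomm_fwd {G H h} hh a _.
Arguments Mcomm_bwd {G H h} hh dec k _.

Lemma calZ_one (G : MLA) : calZ (@one G).
Proof. split. intro y. apply star_1x. intro y. rewrite mul1x, mulx1. reflexivity. Qed.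

Theorem lemma4p13
  (K Q : MLA) (p : K -> Q)
  (hp : mla_hom p) (psurj : forall q : Q, exists k : K, p k = q)
  (pker : forall k : K, p k = one <-> calZ k)
  (X : Type) (F : MLA) (i : X -> F) (Ffree : is_free_mla i)
  (pi : F -> Q) (hpi : mla_hom pi) (pisurj : forall q : Q, exists f : F, pi f = q) :
  let R : F -> Prop := fun x => pi x = one in
  let A : F -> Prop := fun x => Mcomm setT setT x /\ R x in
  let B : F -> Prop := Mcomm R setT in
  exists delta : F -> K,
    (forall a b, A a -> A b -> delta (mul a b) = mul (delta a) (delta b)) /\
    (forall b, B b -> delta b = one) /\
    (forall a, A a -> Mcomm setT setT (delta a)) /\
    (forall a, A a -> p (delta a) = one) /\
    (forall k : K, Mcomm setT setT k -> p k = one -> exists a, A a /\ delta a = k) /\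
    (forall q : Q, Mcomm setT setT q <-> exists k : K, Mcomm setT setT k /\ p k = q).
Proof.
  intros R A B.
  set (kx := fun x : X => proj1_sig (constructive_indefinite_description _ (psurj (pi (i x))))).
  assert (Ekx : forall x, p (kx x) = pi (i x)).
  { intro x. unfold kx. destruct (constructive_indefinite_description _ _). simpl. exact e. }
  destruct (Ffree K kx) as [g [hg [gi _]]].
  assert (pg : forall f, p (g f) = pi f).
  { destruct (Ffree Q (fun x => pi (i x))) as [g0 [_ [_ U]]].
    intro f. rewrite (U pi hpi (fun _ => eq_refl) f).
    apply (U (fun f => p (g f))).
    - intros x y. rewrite (hom_mul hg), (hom_star hg). split; apply hp.
    - intro x. rewrite gi. apply Ekx. }
  assert (decg : forall y : K, exists x z, calZ z /\ y = mul (g x) z).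
  { intro y. destruct (pisurj (p y)) as [f Ef].
    exists f, (mul (inv (g f)) y). split.
    - apply pker. rewrite (hom_mul hp), (hom_inv hp), pg, Ef. apply mulVx.
    - rewrite mulA, mulxV, mul1x. reflexivity. }
  exists g. split; [|split; [|split; [|split; [|split]]]].
  - intros a b _ _. apply (hom_mul hg).
  - intros b [u [v [Hu [Hv ->]]]].
    rewrite (hom_mul hg).
    assert (Hk : is_subgroup (fun x => g x = one)).
    { split; [|split].
      - apply (hom_one hg).
      - intros x y Hx Hy. rewrite (hom_mul hg), Hx, Hy. apply mul1x.
      - intros x Hx. rewrite (hom_inv hg), Hx. apply inv_one. }
    assert (Cr : forall r, R r -> calZ (g r)).
    { intros r Hr. apply pker. rewrite pg. exact Hr. }
    rewrite (Hu _ Hk), (Hv _ Hk).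
    + apply mul1x.
    + intros y [r [f [Hr [_ ->]]]]. rewrite (hom_commg hg).
      apply commg_central. apply Cr, Hr.
    + intros y [r [f [Hr [_ ->]]]]. rewrite (hom_star hg). apply (Cr r Hr).
  - intros a [Ha _]. apply (Mcomm_fwd hg _ Ha).
  - intros a [_ Ha]. rewrite pg. exact Ha.
  - intros k Hk Hp. destruct (Mcomm_bwd hg decg _ Hk) as [a [Ha Ea]].
    exists a. split; [|exact Ea]. split; [exact Ha|]. unfold R. rewrite <- pg, Ea. exact Hp.
  - intro q. split.
    + intro Hq. apply (Mcomm_bwd hp).
      * intro y. destruct (psurj y) as [x <-]. exists x, one. split.
        apply calZ_one. symmetry. apply mulx1.
      * exact Hq.
    + intros [k [Hk <-]]. apply (Mcomm_fwd hp _ Hk).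
Qed.
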